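(* Let $F$ be $\mathbb{C}$ or $\mathbb{R}$ and let $\mathfrak{L}$ be a solvable (left) Leibniz algebra over $F$ of dimension $r+1$ whose nilradical is the $r$-dimensional abelian algebra $A(r)$. Let $\{n_1,\dots,n_r,x\}$ be a basis of $\mathfrak{L}$ with $n_1,\dots,n_r$ a basis of $A(r)$ and $x\notin A(r)$, and write $$[x,n_i]=\sum_{j} L_{ij}n_j,\qquad [n_i,x]=\sum_j R_{ij}n_j,\qquad [x,x]=\sum_j\sigma_j n_j,$$ with $L,R\in F^{r\times r}$, $\sigma=(\sigma_1,\dots,\sigma_r)^T\in F^r$. Assume the basis $n_1,\dots,n_r$ is chosen so that $R$ is in Jordan canonical form (block diagonal, each block upper triangular with a single eigenvalue on the diagonal and $1$'s on the superdiagonal). Then: (1) $\sigma$ lies in the null space of $R^T$, i.e. $R^T\sigma=0$; (2) for all $i,j$, if $R_{ij}\neq 0$ then $\sigma_i=0$.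
   Context: A (left) Leibniz algebra is a vector space with bilinear product satisfying $[x,[y,z]]=[[x,y],z]+[y,[x,z]]$. Solvable: derived series $\mathfrak{L}^{(1)}=[\mathfrak{L},\mathfrak{L}]$, $\mathfrak{L}^{(n+1)}=[\mathfrak{L}^{(n)},\mathfrak{L}^{(n)}]$ eventually zero. Nilradical: the unique maximal nilpotent ideal (nilpotent meaning the lower central series $\mathfrak{L}^2=[\mathfrak{L},\mathfrak{L}]$, $\mathfrak{L}^{k+1}=[\mathfrak{L},\mathfrak{L}^k]$ eventually vanishes). $A(r)$ is the $r$-dimensional algebra with all products zero. *)

(* Defs.v *)
From HB Require Import structures.
From mathcomp Require Import all_boot all_order all_algebra.
Set Implicit Arguments. Unset Strict Implicit. Unset Printing Implicit Defensive.
Import Order.TTheory GRing.Theory Num.Theory.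
Local Open Scope ring_scope.

Section LeibnizDefs.
Variables (F : fieldType) (L : vectType F) (mul : L -> L -> L).

Definition bilinear_prod : Prop :=
  (forall (a : F) (u v w : L), mul (a *: u + v) w = a *: mul u w + mul v w) /\
  (forall (a : F) (u v w : L), mul w (a *: u + v) = a *: mul w u + mul w v).

Definition left_leibniz : Prop :=
  forall x y z : L, mul x (mul y z) = mul (mul x y) z + mul y (mul x z).

(* [A, B] : the subspace spanned by all products a b, a in A, b in B
   (by bilinearity it suffices to take a, b in bases of A, B). *)
Definition prodsp (A B : {vspace L}) : {vspace L} :=
  <<[seq mul a b | a <- vbasis A, b <- vbasis B]>>%VS.

Fixpoint der (k : nat) : {vspace L} :=
  if k is k'.+1 then prodsp (der k') (der k') else fullv.

Definition solvable_alg : Prop := exists k, der k = 0%VS.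

Definition is_ideal (I : {vspace L}) : Prop :=
  forall a u : L, u \in I -> (mul a u \in I) /\ (mul u a \in I).

Fixpoint lcs (I : {vspace L}) (k : nat) : {vspace L} :=
  if k is k'.+1 then prodsp I (lcs I k') else I.

Definition nilpotent_sp (I : {vspace L}) : Prop := exists k, lcs I k = 0%VS.

Definition is_nilradical (N : {vspace L}) : Prop :=
  [/\ is_ideal N, nilpotent_sp N &
      forall I : {vspace L}, is_ideal I -> nilpotent_sp I -> (I <= N)%VS].

End LeibnizDefs.

(* R is a Jordan matrix: R i i = lam i, R i (i+1) = 1 if i and i+1 lie in the
   same Jordan block (c i = true), 0 otherwise; all other entries 0;
   lam is constant on each block. *)
Definition jordan_form (F : fieldType) (r : nat) (R : 'M[F]_r) : Prop :=
  exists (lam : 'I_r -> F) (c : 'I_r -> bool),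
    (forall i j : 'I_r, j = i.+1 :> nat -> c i -> lam i = lam j) /\
    (forall i j : 'I_r,
        R i j = if i == j then lam i
                else if (j == i.+1 :> nat) && c i then 1 else 0).

(* Main.v *)
Require Import Defs.
From HB Require Import structures.
From mathcomp Require Import all_boot all_order all_algebra.
From mathcomp Require Import zify.
Import GRing.Theory Num.Theory.
Local Open Scope ring_scope.

Theorem lemma4p1 (F : numFieldType) (L : vectType F) (mul : L -> L -> L)
  (r : nat) (nb : 'I_r -> L) (x : L)
  (Hbil : bilinear_prod mul)
  (Hleib : left_leibniz mul)
  (Hsolv : solvable_alg mul)
  (Hbasis : basis_of fullv (x :: [seq nb i | i <- enum 'I_r]))
  (Hnil : is_nilradical mul <<[seq nb i | i <- enum 'I_r]>>%VS)
  (Habel : forall i j : 'I_r, mul (nb i) (nb j) = 0)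
  (Lm Rm : 'M[F]_r) (sigma : 'cV[F]_r)
  (HL : forall i : 'I_r, mul x (nb i) = \sum_(j < r) Lm i j *: nb j)
  (HR : forall i : 'I_r, mul (nb i) x = \sum_(j < r) Rm i j *: nb j)
  (Hs : mul x x = \sum_(j < r) sigma j 0 *: nb j)
  (HJ : jordan_form Rm) :
  Rm^T *m sigma = 0 /\ (forall i j : 'I_r, Rm i j != 0 -> sigma i 0 = 0).
Proof.
have [Hl _] := Hbil.
have mulD : forall u v w, mul (u + v) w = mul u w + mul v w.
  by move=> u v w; rewrite -[u in LHS]scale1r Hl scale1r.
have mul0 : forall w, mul 0 w = 0.
  by move=> w; apply: (addrI (mul 0 w)); rewrite -mulD !addr0.
have mulZ : forall a u w, mul (a *: u) w = a *: mul u w.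
  by move=> a u w; rewrite -[a *: u]addr0 Hl mul0 addr0.
have Hxxx : mul (mul x x) x = 0.
  by apply: (addrI (mul x (mul x x))); rewrite addr0 addrC -Hleib.
have Hfree : free [seq nb i | i <- enum 'I_r].
  by have := basis_free Hbasis; rewrite free_cons => /andP[].
have Hnth : forall i : 'I_r, [seq nb i | i <- enum 'I_r]`_i = nb i.
  move=> i; rewrite (nth_map i) ?size_enum_ord ?ltn_ord //.
  by rewrite nth_ord_enum.
have Hind : forall k : 'I_r -> F, \sum_(i < r) k i *: nb i = 0 -> forall i, k i = 0.
  move=> k Hk i.
  have := elimT (@freeP _ _ r (map_tuple nb (ord_tuple r))) Hfree.
  move=> /(_ k) H; apply: H.
  by rewrite -[RHS]Hk; apply: eq_bigr => j _; rewrite Hnth.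
have P1 : Rm^T *m sigma = 0.
  apply/matrixP => k z; rewrite (ord1 z) !mxE.
  move: k; apply: Hind.
  apply: (etrans _ Hxxx); rewrite Hs (big_morph (fun u => mul u x) (fun u v => mulD u v x) (mul0 x)).
  transitivity (\sum_(j < r) \sum_(k < r) (sigma j 0 * Rm j k) *: nb k).
    have -> : \sum_(j < r) \sum_(k < r) (sigma j 0 * Rm j k) *: nb k =
              \sum_(k < r) \sum_(j < r) (sigma j 0 * Rm j k) *: nb k.
      exact: exchange_big.
    apply: eq_bigr => k _; rewrite -scaler_suml; congr (_ *: _).
    by apply: eq_bigr => j _; rewrite !mxE mulrC.
  apply: eq_bigr => j _ /=; rewrite mulZ HR scaler_sumr.
  by apply: eq_bigr => k _; rewrite scalerA.
split => //.
have [lam [c [Hc HRm]]] := HJ.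
have Eq : forall k : 'I_r, \sum_(j < r) Rm j k * sigma j 0 = 0.
  move=> k; have := congr1 (fun M : 'cV[F]_r => M k 0) P1; rewrite !mxE => H; rewrite -[RHS]H.
  by apply: eq_bigr => j _; rewrite mxE.
have E0 : forall k : 'I_r, val k = 0%N -> lam k * sigma k 0 = 0.
  move=> k k0; rewrite -[RHS](Eq k) (bigD1 k) //= HRm eqxx big1 ?addr0 //.
  move=> j /negPf jk; rewrite HRm jk k0 /= mul0r //.
have E1 : forall k j0 : 'I_r, val k = (val j0).+1 ->
    lam k * sigma k 0 + (if c j0 then sigma j0 0 else 0) = 0.
  move=> k j0 kj; rewrite -[RHS](Eq k) (bigD1 k) //= HRm eqxx; congr (_ + _).
  have j0k : j0 != k by apply/eqP => e; move: kj; rewrite e; lia.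
  rewrite (bigD1 j0) //= HRm (negPf j0k) kj eqxx /=.
  rewrite big1 ?addr0; first by case: (c j0); rewrite ?mul1r ?mul0r.
  move=> j /andP[jk jj0]; rewrite HRm (negPf jk).
  case: eqP => [e|]; last by rewrite mul0r.
  by exfalso; move/negP: jj0; apply; apply/eqP/val_inj; move: e; rewrite kj => -[].
have L1 : forall n (k : 'I_r), val k = n -> lam k != 0 -> sigma k 0 = 0.
  elim=> [|m IH] k kn lk.
    by have /eqP := E0 k kn; rewrite mulf_eq0 (negPf lk) => /eqP.
  have mr : (m < r)%N by have := ltn_ord k; rewrite kn; lia.
  have := E1 k (Ordinal mr) kn.
  case cm: (c (Ordinal mr)).
    rewrite (IH (Ordinal mr)) //; last by rewrite (Hc _ k) //= kn.
    by rewrite addr0 => /eqP; rewrite mulf_eq0 (negPf lk) => /eqP.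
  by rewrite addr0 => /eqP; rewrite mulf_eq0 (negPf lk) => /eqP.
move=> i j; have [<-|ij] := eqVneq i j.
  by rewrite HRm eqxx => H; apply: (L1 _ i erefl).
rewrite HRm (negPf ij).
have [ji|nji] := eqVneq (nat_of_ord j) (nat_of_ord i).+1; last first.
  by rewrite /= eqxx.
case ci: (c i); rewrite /= ?eqxx // => _.
have := E1 j i ji; rewrite ci.
have [lj0|ljn] := eqVneq (lam j) 0.
  by rewrite lj0 mul0r add0r.
by move=> _; apply: (L1 _ i erefl); rewrite (Hc i j ji ci).
Qed.
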